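(* Let $\Sigma\cong\mathbb R^{10}$ have coordinates $(a_1,a_2,a_3,a_4,\alpha_1,\alpha_2,\alpha_3,\beta_1,\beta_2,\gamma)$, and consider the vector fields $$\mathbf V_1=-\alpha_1\partial_{a_2}-\alpha_2\partial_{a_3}+3\alpha_3\partial_{a_4}-2\beta_1\partial_{\alpha_2}+2\beta_2\partial_{\alpha_3}-\gamma\partial_{\beta_2},$$ $$\mathbf V_2=3\alpha_1\partial_{a_1}+\alpha_2\partial_{a_2}-\alpha_3\partial_{a_3}+2\beta_1\partial_{\alpha_1}+2\beta_2\partial_{\alpha_2}+\gamma\partial_{\beta_1},$$ $$\mathbf V_3=3a_2\partial_{a_1}+(2a_3-a_1)\partial_{a_2}+(a_4-2a_2)\partial_{a_3}-3a_3\partial_{a_4}+\alpha_2\partial_{\alpha_1}-2(\alpha_1+\alpha_3)\partial_{\alpha_2}+\alpha_2\partial_{\alpha_3}+\beta_2\partial_{\beta_1}-\beta_1\partial_{\beta_2},$$ $$\mathbf T_1=3\partial_{a_1}+\partial_{a_3},\qquad \mathbf T_2=\partial_{a_2}+3\partial_{a_4},\qquad \mathbf T_3=\partial_{\alpha_1}-\partial_{\alpha_3}.$$ Define the polynomials $\tilde I_1=\gamma\alpha_2-2\beta_1\beta_2$, $\tilde I_2=\gamma(\alpha_1+\alpha_3)+\beta_2^2-\beta_1^2$, $\tilde I_3=\gamma^2(a_1-3a_3)+3\gamma(\beta_2\alpha_2-\beta_1(\alpha_1+\alpha_3))+2\beta_1(\beta_1^2-3\beta_2^2)$, $\tilde I_4=\gamma^2(3a_2-a_4)-3\gamma(\beta_1\alpha_2+\beta_2(\alpha_1+\alpha_3))+2\beta_2(3\beta_1^2-\beta_2^2)$,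 and $I_1=2(\tilde I_1^2-3\tilde I_2^2)\tilde I_1\tilde I_3\tilde I_4+(3\tilde I_1^2-\tilde I_2^2)\tilde I_2(\tilde I_3^2-\tilde I_4^2)$, $I_2=\tilde I_1^2+\tilde I_2^2$, $I_3=\tilde I_3^2+\tilde I_4^2$, $I_4=\gamma$. Then $\tilde I_1,\dots,\tilde I_4,\gamma$ are annihilated by $\mathbf T_1,\mathbf T_2,\mathbf T_3,\mathbf V_1,\mathbf V_2$, and $I_1,I_2,I_3,I_4$ are homogeneous polynomials on $\Sigma$ annihilated by all six vector fields $\mathbf V_1,\mathbf V_2,\mathbf V_3,\mathbf T_1,\mathbf T_2,\mathbf T_3$.
   Context: Interpretation: points of $\Sigma$ parametrize Killing tensors $\mathbf L$ of valence three of the Euclidean plane via the Cartesian components $L^{111}=a_1+3\alpha_1y+3\beta_1y^2+\gamma y^3$, $L^{112}=a_2+\alpha_2y-\alpha_1x-2\beta_1xy+\beta_2y^2-\gamma xy^2$, $L^{122}=a_3-\alpha_2x-\alpha_3y-2\beta_2xy+\beta_1x^2+\gamma yx^2$, $L^{222}=a_4+3\alpha_3x+3\beta_2x^2-\gamma x^3$. $\mathbf V_1,\mathbf V_2,\mathbf V_3$ are the infinitesimal generators of the action induced on $\Sigma$ by the Euclidean isometry group (translations in $x$, $y$ and rotation), and $\mathbf T_1,\mathbf T_2,\mathbf T_3$ span the tangent directions of the subspace of trivial Killing tensors $\mathbf g\odot\mathbf X$ ($\mathbf X$ a Killing vector). Functions annihilated by all six fields are the isometry-group invariants of non-trivial valence-three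 Killing tensors. *)

(* Defs.v *)
From HB Require Import structures.
From mathcomp Require Import all_boot all_order all_algebra.
From mathcomp Require Import mpoly.
From Stdlib Require Import List.

Set Implicit Arguments.
Unset Strict Implicit.
Unset Printing Implicit Defensive.

Import GRing.Theory Num.Theory.
Local Open Scope ring_scope.

Section Sigma.
Variable R : realFieldType.
Notation P := {mpoly R[10]}.

Definition cX (i : nat) : P := 'X_(inord i).
Definition a1 := cX 0.  Definition a2 := cX 1.  Definition a3 := cX 2.
Definition a4 := cX 3.  Definition al1 := cX 4. Definition al2 := cX 5.
Definition al3 := cX 6. Definition be1 := cX 7. Definition be2 := cX 8.
Definition ga := cX 9.

Definition D (i : nat) (p : P) : P := mderiv (inord i) p.
Definition d_a1 := D 0.  Definition d_a2 := D 1.  Definition d_a3 := D 2.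
Definition d_a4 := D 3.  Definition d_al1 := D 4. Definition d_al2 := D 5.
Definition d_al3 := D 6. Definition d_be1 := D 7. Definition d_be2 := D 8.
Definition d_ga := D 9.

Definition V1 (p : P) : P :=
  - al1 * d_a2 p - al2 * d_a3 p + 3 * al3 * d_a4 p - 2 * be1 * d_al2 p
  + 2 * be2 * d_al3 p - ga * d_be2 p.
Definition V2 (p : P) : P :=
  3 * al1 * d_a1 p + al2 * d_a2 p - al3 * d_a3 p + 2 * be1 * d_al1 p
  + 2 * be2 * d_al2 p + ga * d_be1 p.
Definition V3 (p : P) : P :=
  3 * a2 * d_a1 p + (2 * a3 - a1) * d_a2 p + (a4 - 2 * a2) * d_a3 p
  - 3 * a3 * d_a4 p + al2 * d_al1 p - 2 * (al1 + al3) * d_al2 p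
  + al2 * d_al3 p + be2 * d_be1 p - be1 * d_be2 p.
Definition T1 (p : P) : P := 3 * d_a1 p + d_a3 p.
Definition T2 (p : P) : P := d_a2 p + 3 * d_a4 p.
Definition T3 (p : P) : P := d_al1 p - d_al3 p.

Definition tI1 : P := ga * al2 - 2 * be1 * be2.
Definition tI2 : P := ga * (al1 + al3) + be2 ^+ 2 - be1 ^+ 2.
Definition tI3 : P :=
  ga ^+ 2 * (a1 - 3 * a3) + 3 * ga * (be2 * al2 - be1 * (al1 + al3))
  + 2 * be1 * (be1 ^+ 2 - 3 * be2 ^+ 2).
Definition tI4 : P :=
  ga ^+ 2 * (3 * a2 - a4) - 3 * ga * (be1 * al2 + be2 * (al1 + al3))
  + 2 * be2 * (3 * be1 ^+ 2 - be2 ^+ 2).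

Definition I1 : P :=
  2 * (tI1 ^+ 2 - 3 * tI2 ^+ 2) * tI1 * tI3 * tI4
  + (3 * tI1 ^+ 2 - tI2 ^+ 2) * tI2 * (tI3 ^+ 2 - tI4 ^+ 2).
Definition I2 : P := tI1 ^+ 2 + tI2 ^+ 2.
Definition I3 : P := tI3 ^+ 2 + tI4 ^+ 2.
Definition I4 : P := ga.

Definition annihilates (Vs : list (P -> P)) (ps : list P) : Prop :=
  forall V p, In V Vs -> In p ps -> V p = 0.

End Sigma.

(* Main.v *)
Require Import Defs.
From HB Require Import structures.
From mathcomp Require Import all_boot all_order all_algebra.
From mathcomp Require Import mpoly.
From mathcomp Require Import ring.
From Stdlib Require Import List.
Import ListNotations.
Import GRing.Theory.
Local Open Scope ring_scope.

Section S.
Variable R : realFieldType.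
Notation P := {mpoly R[10]}.

Lemma D_cX_eq i : (i < 10)%N -> @D R i (cX R i) = 1.
Proof.
move=> _; rewrite /D /cX mderivX mnm1E eqxx scale1r.
have -> : (U_(@inord 9 i) - U_(inord i))%MM = 0%MM.
  by apply/mnmP => k; rewrite mnmBE mnm0E subnn.
by rewrite mpolyX0.
Qed.

Lemma D_cX_neq i j : (i < 10)%N -> (j < 10)%N -> i != j -> @D R i (cX R j) = 0.
Proof.
move=> hi hj hij; rewrite /D /cX mderivX mnm1E.
have -> : (@inord 9 j == inord i) = false.
  apply/negbTE; apply: contra hij => /eqP/(congr1 val).
  by rewrite /= !inordK // => ->.
by rewrite scale0r.
Qed.

Definition isDer (V : P -> P) :=
  [/\ forall p q, V (p + q) = V p + V q, forall p, V (- p) = - V p,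
      forall p q, V (p * q) = V p * q + p * V q & forall n, V n%:R = 0].

Lemma D_der i : isDer (@D R i).
Proof.
split=> [p q|p|p q|k]; rewrite /D ?mderivD ?mderivN ?mderivM //.
by rewrite -mpolyC_nat mderivC.
Qed.

Lemma derD {V} : isDer V -> forall p q, V (p + q) = V p + V q. Proof. by case. Qed.
Lemma derN {V} : isDer V -> forall p, V (- p) = - V p. Proof. by case. Qed.
Lemma derM {V} : isDer V -> forall p q, V (p * q) = V p * q + p * V q. Proof. by case. Qed.
Lemma der1 {V} : isDer V -> V 1 = 0. Proof. by case=> _ _ _ h; rewrite -(h 1%N). Qed.
Lemma derC {V} : isDer V -> forall n, V n%:R = 0. Proof. by case. Qed.

Ltac pushD := rewrite /d_a1 /d_a2 /d_a3 /d_a4 /d_al1 /d_al2 /d_al3 /d_be1 /d_be2 /d_ga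
  ?(derD (D_der _)) ?(derN (D_der _)) ?(derM (D_der _)) ?(derC (D_der _)).

Ltac gen := repeat match goal with
  | |- context [@D R ?i ?p] => let z := fresh "z" in generalize (@D R i p) => z
  | |- context [cX R ?j] => let z := fresh "x" in generalize (cX R j) => z
  end;
  generalize (a1 R) (a2 R) (a3 R) (a4 R) (al1 R) (al2 R) (al3 R) (be1 R) (be2 R) (ga R);
  intros.
Ltac derring := split => *; pushD; gen; ring.
Lemma V1_der : isDer (@V1 R). Proof. rewrite /V1; derring. Qed.
Lemma V2_der : isDer (@V2 R). Proof. rewrite /V2; derring. Qed.
Lemma V3_der : isDer (@V3 R). Proof. rewrite /V3; derring. Qed.
Lemma T1_der : isDer (@T1 R). Proof. rewrite /T1; derring. Qed.
Lemma T2_der : isDer (@T2 R). Proof. rewrite /T2; derring. Qed.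
Lemma T3_der : isDer (@T3 R). Proof. rewrite /T3; derring. Qed.

Ltac pushV H := rewrite ?expr2; repeat (rewrite (derC H) || rewrite (der1 H) || rewrite (derD H) || rewrite (derN H) || rewrite (derM H) || rewrite (derC H)).
Ltac unvars := rewrite /a1 /a2 /a3 /a4 /al1 /al2 /al3 /be1 /be2 /ga.
Ltac evalD := rewrite /d_a1 /d_a2 /d_a3 /d_a4 /d_al1 /d_al2 /d_al3 /d_be1 /d_be2 /d_ga;
   unvars; rewrite ?D_cX_eq // ?D_cX_neq //.
Ltac comp H := pushV H; rewrite /V1 /V2 /V3 /T1 /T2 /T3; evalD; gen; ring.

Ltac solveV H := rewrite /tI1 /tI2 /tI3 /tI4; comp H.

Lemma zero_tI V : isDer V -> V (ga R) = 0 ->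
  V (tI1 R) = 0 -> V (tI2 R) = 0 -> V (tI3 R) = 0 -> V (tI4 R) = 0 ->
  [/\ V (I1 R) = 0, V (I2 R) = 0, V (I3 R) = 0 & V (I4 R) = 0].
Proof.
rewrite /I1 /I2 /I3 /I4.
move: (ga R) (tI1 R) (tI2 R) (tI3 R) (tI4 R) => g t1 t2 t3 t4 H h0 h1 h2 h3 h4.
split; pushV H; rewrite ?h0 ?h1 ?h2 ?h3 ?h4; ring.
Qed.

Lemma T1_all : [/\ @T1 R (ga R) = 0, T1 (tI1 R) = 0, T1 (tI2 R) = 0, T1 (tI3 R) = 0 & T1 (tI4 R) = 0].
Proof. split; solveV T1_der. Qed.
Lemma T2_all : [/\ @T2 R (ga R) = 0, T2 (tI1 R) = 0, T2 (tI2 R) = 0, T2 (tI3 R) = 0 & T2 (tI4 R) = 0].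
Proof. split; solveV T2_der. Qed.
Lemma T3_all : [/\ @T3 R (ga R) = 0, T3 (tI1 R) = 0, T3 (tI2 R) = 0, T3 (tI3 R) = 0 & T3 (tI4 R) = 0].
Proof. split; solveV T3_der. Qed.
Lemma V1_all : [/\ @V1 R (ga R) = 0, V1 (tI1 R) = 0, V1 (tI2 R) = 0, V1 (tI3 R) = 0 & V1 (tI4 R) = 0].
Proof. split; solveV V1_der. Qed.
Lemma V2_all : [/\ @V2 R (ga R) = 0, V2 (tI1 R) = 0, V2 (tI2 R) = 0, V2 (tI3 R) = 0 & V2 (tI4 R) = 0].
Proof. split; solveV V2_der. Qed.
Lemma V3_all : [/\ @V3 R (ga R) = 0, V3 (tI1 R) = -2 * tI2 R, V3 (tI2 R) = 2 * tI1 R,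
   V3 (tI3 R) = 3 * tI4 R & V3 (tI4 R) = -3 * tI3 R].
Proof. split; solveV V3_der. Qed.

Lemma V3_I : [/\ @V3 R (I1 R) = 0, V3 (I2 R) = 0, V3 (I3 R) = 0 & V3 (I4 R) = 0].
Proof.
move: V3_all; rewrite /I1 /I2 /I3 /I4.
move: (ga R) (tI1 R) (tI2 R) (tI3 R) (tI4 R) => g t1 t2 t3 t4 [h0 h1 h2 h3 h4].
split; pushV V3_der; rewrite ?h0 ?h1 ?h2 ?h3 ?h4; ring.
Qed.
End S.

Section H.
Variable R : realFieldType.
Notation P := {mpoly R[10]}.

Lemma hM d e f (p q : P) : p \is d.-homog -> q \is e.-homog -> (d + e)%N = f -> p * q \is f.-homog.
Proof. by move=> hp hq <-; apply: dhomogM. Qed.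
Lemma hX d k f (p : P) : p \is d.-homog -> (d * k)%N = f -> p ^+ k \is f.-homog.
Proof. by move=> hp <-; apply: dhomogMn. Qed.
Lemma hC n : (n%:R : P) \is 0.-homog.
Proof. by apply: rpredMn; apply: dhomog1. Qed.
Lemma hcX j : cX R j \is 1.-homog.
Proof. by rewrite /cX dhomogX; apply/eqP; apply: mdeg1. Qed.

Ltac hom0 := lazymatch goal with
| |- is_true ((_ + _) \in _) => apply: rpredD; hom0
| |- is_true ((- _) \in _) => rewrite rpredN; hom0
| |- is_true ((GRing.natmul 1 _) \in _) => exact: hC
| |- is_true ((_ * _) \in _) => eapply hM; [hom0|hom0|reflexivity]
| |- is_true ((_ ^+ _) \in _) => eapply hX; [hom0|reflexivity]
| |- is_true (cX _ _ \in _) => exact: hcX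
end.
Lemma tI1_h : tI1 R \is 2.-homog. Proof. rewrite /tI1 /a1 /a2 /a3 /a4 /al1 /al2 /al3 /be1 /be2 /ga; hom0. Qed.
Lemma tI2_h : tI2 R \is 2.-homog. Proof. rewrite /tI2 /a1 /a2 /a3 /a4 /al1 /al2 /al3 /be1 /be2 /ga; hom0. Qed.
Lemma tI3_h : tI3 R \is 3.-homog. Proof. rewrite /tI3 /a1 /a2 /a3 /a4 /al1 /al2 /al3 /be1 /be2 /ga; hom0. Qed.
Lemma tI4_h : tI4 R \is 3.-homog. Proof. rewrite /tI4 /a1 /a2 /a3 /a4 /al1 /al2 /al3 /be1 /be2 /ga; hom0. Qed.
Ltac hom := lazymatch goal with
| |- is_true (tI1 _ \in _) => exact: tI1_h
| |- is_true (tI2 _ \in _) => exact: tI2_h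
| |- is_true (tI3 _ \in _) => exact: tI3_h
| |- is_true (tI4 _ \in _) => exact: tI4_h
| |- is_true ((_ + _) \in _) => apply: rpredD; hom
| |- is_true ((- _) \in _) => rewrite rpredN; hom
| |- is_true ((GRing.natmul 1 _) \in _) => exact: hC
| |- is_true ((_ * _) \in _) => eapply hM; [hom|hom|reflexivity]
| |- is_true ((_ ^+ _) \in _) => eapply hX; [hom|reflexivity]
| |- is_true (cX _ _ \in _) => exact: hcX
end.
Lemma I_homog : [/\ I1 R \is homog mdeg, I2 R \is homog mdeg, I3 R \is homog mdeg & I4 R \is homog mdeg].
Proof.
split.
- apply: (@homogE _ _ _ 12); rewrite /I1; hom.
- apply: (@homogE _ _ _ 4); rewrite /I2; hom.
- apply: (@homogE _ _ _ 6); rewrite /I3; hom.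
- apply: (@homogE _ _ _ 1); rewrite /I4 /ga; hom.
Qed.
End H.

Lemma I_all {R : realFieldType} {V : {mpoly R[10]} -> {mpoly R[10]}} :
  @isDer R V -> [/\ V (ga R) = 0, V (tI1 R) = 0, V (tI2 R) = 0, V (tI3 R) = 0 & V (tI4 R) = 0] ->
  [/\ V (I1 R) = 0, V (I2 R) = 0, V (I3 R) = 0 & V (I4 R) = 0].
Proof. by move=> H [h0 h1 h2 h3 h4]; apply: zero_tI. Qed.

Theorem mainTheorem4 (R : realFieldType) :
  annihilates [:: @T1 R; @T2 R; @T3 R; @V1 R; @V2 R]
              [:: @tI1 R; @tI2 R; @tI3 R; @tI4 R; @ga R]
  /\ annihilates [:: @V1 R; @V2 R; @V3 R; @T1 R; @T2 R; @T3 R]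
                 [:: @I1 R; @I2 R; @I3 R; @I4 R]
  /\ (@I1 R \is homog mdeg) /\ (@I2 R \is homog mdeg)
  /\ (@I3 R \is homog mdeg) /\ (@I4 R \is homog mdeg).
Proof.
have [? ? ? ? ?] := T1_all R.
have [? ? ? ? ?] := T2_all R.
have [? ? ? ? ?] := T3_all R.
have [? ? ? ? ?] := V1_all R.
have [? ? ? ? ?] := V2_all R.
have [? ? ? ?] := I_all (T1_der R) (T1_all R).
have [? ? ? ?] := I_all (T2_der R) (T2_all R).
have [? ? ? ?] := I_all (T3_der R) (T3_all R).
have [? ? ? ?] := I_all (V1_der R) (V1_all R).
have [? ? ? ?] := I_all (V2_der R) (V2_all R).
have [? ? ? ?] := V3_I R.
have [? ? ? ?] := I_homog R.
split; [|split; [|by do !split]];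
  move=> V p /= HV Hp;
  repeat (destruct HV as [<-|HV]); try contradiction;
  repeat (destruct Hp as [<-|Hp]); try contradiction; assumption.
Qed.
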